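(* Let $A$ be a commutative ring over $\mathbf F_p$ with an action of a cyclic group $\langle\sigma\rangle$ of order $p$, let $N\cdot A=\{(1+\sigma+\dots+\sigma^{p-1})a: a\in A\}$ and $\mathrm{Nm}(a)=a\,\sigma(a)\cdots\sigma^{p-1}(a)$. Let $A'\subset A^\sigma$ be a subring containing $\mathrm{Nm}(A)$ and $N\cdot A$ (so $N\cdot A$ is an ideal of $A'$). Then every ring homomorphism $\chi\colon A'\to k$ that vanishes on $N\cdot A$ extends uniquely to a ring homomorphism $\tilde\chi\colon A\to k$, and this extension is given by $\tilde\chi(a)=\chi(\mathrm{Nm}(a))^{1/p}$.
   Context: $k$ is an algebraic closure of $\mathbf F_p$ (so $p$-th roots are unique); $A^\sigma$ denotes the $\sigma$-invariants of $A$. *)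

(* Defs.v *)
From HB Require Import structures.
From mathcomp Require Import all_boot all_order all_algebra.
Set Implicit Arguments. Unset Strict Implicit. Unset Printing Implicit Defensive.
Import GRing.Theory.
Local Open Scope ring_scope.

Definition normsum (A : comNzRingType) (s : A -> A) (p : nat) (a : A) : A :=
  \sum_(i < p) iter i s a.

Definition Nm (A : comNzRingType) (s : A -> A) (p : nat) (a : A) : A :=
  \prod_(i < p) iter i s a.

Definition algebraic_over_prime_field (k : fieldType) : Prop :=
  forall x : k, exists q : {poly k},
    q != 0 /\ (forall i, exists n : nat, q`_i = n%:R) /\ root q x.

(* Main.v *)
Require Import Defs.
From HB Require Import structures.
From mathcomp Require Import all_boot all_order all_algebra.
Set Implicit Arguments. Unset Strict Implicit. Unset Printing Implicit Defensive.
Import GRing.Theory.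
Local Open Scope ring_scope.

Section Core.
Variables (A : comNzRingType) (n : nat) (s : {rmorphism A -> A}).
Hypothesis hper : forall a, iter n.+1 s a = a.

Lemma iterMr i x y : iter i s (x * y) = iter i s x * iter i s y.
Proof. by elim: i => //= i ->; rewrite rmorphM. Qed.
Lemma iterDr i x y : iter i s (x + y) = iter i s x + iter i s y.
Proof. by elim: i => //= i ->; rewrite rmorphD. Qed.
Lemma iterNr i x : iter i s (- x) = - iter i s x.
Proof. by elim: i => //= i ->; rewrite rmorphN. Qed.
Lemma iter1r i : iter i s 1 = 1.
Proof. by elim: i => //= i ->; rewrite rmorph1. Qed.
Lemma iter_natr i m : iter i s m%:R = m%:R.
Proof. by elim: i => //= i ->; rewrite rmorph_nat. Qed.
Lemma iter_prodr i (I : finType) (F : I -> A) :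
  iter i s (\prod_j F j) = \prod_j iter i s (F j).
Proof. by elim: i => [|i IH] /=; [|rewrite IH rmorph_prod]; apply: eq_bigr. Qed.
Lemma iter_sumr i (I : finType) (F : I -> A) :
  iter i s (\sum_j F j) = \sum_j iter i s (F j).
Proof. by elim: i => [|i IH] /=; [|rewrite IH rmorph_sum]; apply: eq_bigr. Qed.
Lemma iter_mod i x : iter i s x = iter (i %% n.+1) s x.
Proof.
rewrite {1}(divn_eq i n.+1) iterD; move: (iter _ s x) => y.
by elim: (i %/ n.+1)%N => // q IH; rewrite mulSn iterD IH hper.
Qed.

Definition rot (j : 'I_n.+1) (f : {ffun 'I_n.+1 -> bool}) : {ffun 'I_n.+1 -> bool} :=
  [ffun i => f (i - j)].

Lemma rotK j : cancel (rot (- j)) (rot j).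
Proof. by move=> f; apply/ffunP => i; rewrite !ffunE opprK subrK. Qed.

Definition V (G : bool -> A) (f : {ffun 'I_n.+1 -> bool}) :=
  \prod_(i : 'I_n.+1) iter i s (G (f i)).

Definition cnt (f : {ffun 'I_n.+1 -> bool}) := (\sum_(i : 'I_n.+1) (f i : nat))%N.

Lemma iter_add (i j : 'I_n.+1) x : iter j s (iter i s x) = iter (i + j)%R s x.
Proof. by rewrite -iterD addnC iter_mod. Qed.

Lemma V_rot G f (j : 'I_n.+1) : iter j s (V G f) = V G (rot j f).
Proof.
rewrite /V iter_prodr [RHS](reindex_inj (addIr j)) /=.
by apply: eq_bigr => i _; rewrite iter_add ffunE addrK.
Qed.

Lemma cnt_rot f j : cnt (rot j f) = cnt f.
Proof.
rewrite /cnt [LHS](reindex_inj (addIr j)) /=.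
by apply: eq_bigr => i _; rewrite ffunE addrK.
Qed.

Lemma rot_ev f j : rot (- j) f 0 = f j.
Proof. by rewrite ffunE sub0r opprK. Qed.

Lemma main_id (h : nat -> A) (hs : forall k, s (h k) = h k) G :
  \sum_(j < n.+1) iter j s (\sum_f h (cnt f) * (f 0 : nat)%:R * V G f)
  = \sum_f h (cnt f) * (cnt f)%:R * V G f.
Proof.
have hit k j : iter j s (h k) = h k by elim: j => //= j ->.
transitivity (\sum_(j < n.+1) \sum_f h (cnt f) * (f j : nat)%:R * V G f).
  apply: eq_bigr => j _; rewrite iter_sumr.
  rewrite (reindex_inj (can_inj (rotK j))) /=.
  apply: eq_bigr => f _; rewrite !iterMr hit iter_natr V_rot rotK.
  by rewrite /rot cnt_rot rot_ev.
rewrite exchange_big /=; apply: eq_bigr => f _.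
by rewrite -mulr_suml -mulr_sumr -natr_sum.
Qed.


Definition ffalse : {ffun 'I_n.+1 -> bool} := [ffun => false].
Definition ftrue : {ffun 'I_n.+1 -> bool} := [ffun => true].
Definition cnt' (f : {ffun 'I_n.+1 -> bool}) := (\sum_(i : 'I_n.+1) (~~ f i : nat))%N.

Lemma cnt_compl f : (cnt f + cnt' f)%N = n.+1.
Proof.
rewrite /cnt /cnt' -big_split /= (eq_bigr (fun _ => 1%N)); last by move=> i _; case: (f i).
by rewrite sum1_card card_ord.
Qed.

Lemma cnt0 f : cnt f = 0%N -> f = ffalse.
Proof.
move=> /eqP; rewrite sum_nat_eq0 => /forallP H; apply/ffunP => i.
by rewrite ffunE; move: (H i); case: (f i).
Qed.

Lemma cntT f : cnt f = n.+1 -> f = ftrue.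
Proof.
move=> H; have : cnt' f == 0%N by rewrite -(eqn_add2l (cnt f)) cnt_compl H addn0.
rewrite sum_nat_eq0 => /forallP H'; apply/ffunP => i.
by rewrite ffunE; move: (H' i); case: (f i).
Qed.

Lemma cnt_ffalse : cnt ffalse = 0%N.
Proof. by rewrite /cnt big1 // => i _; rewrite ffunE. Qed.

Lemma cnt_ftrue : cnt ftrue = n.+1.
Proof.
by rewrite /cnt (eq_bigr (fun _ => 1%N)) ?sum1_card ?card_ord // => i _; rewrite ffunE.
Qed.

Lemma ftrue_neq : ftrue != ffalse.
Proof.
apply/eqP => H; have : ftrue ord0 = ffalse ord0 by rewrite H.
by rewrite !ffunE.
Qed.

Lemma expand (X Y : 'I_n.+1 -> A) :
  \prod_i (X i + Y i) = \sum_(f : {ffun 'I_n.+1 -> bool}) \prod_i (if f i then X i else Y i).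
Proof.
rewrite -(bigA_distr_bigA (fun i (b : bool) => if b then X i else Y i)).
by apply: eq_bigr => i _; rewrite big_bool.
Qed.

Hypothesis hp : prime n.+1.
Hypothesis hchar : (n.+1)%:R = 0 :> A.

Lemma natr_dvd m : (n.+1 %| m)%N -> m%:R = 0 :> A.
Proof. by move/dvdnP => [q ->]; rewrite natrM hchar mulr0. Qed.

Definition inv k : A := - (s2val (Bezoutr k (ltn0Sn n)))%:R.

Lemma invP k : (0 < k < n.+1)%N -> k%:R * inv k = 1.
Proof.
case/andP=> k0 kp; rewrite /inv; case: (Bezoutr k (ltn0Sn n)) => c _ /= H.
have : gcdn k n.+1 = 1%N.
  apply/eqP; change (coprime k n.+1); rewrite coprime_sym prime_coprime //; apply/negP => /dvdn_leq.
  by move=> /(_ k0); rewrite leqNgt kp.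
move=> g; rewrite g in H; move/natr_dvd: H; rewrite natrD natrM => /eqP.
by move=> /eqP H; apply/eqP; rewrite mulrN eq_sym -addr_eq0 mulrC H.
Qed.


Definition Nm' a := \prod_(i < n.+1) iter i s a.
Definition wt k : A := if (0 < k < n.+1)%N then inv k else 0.
Lemma wt_s k : s (wt k) = wt k.
Proof. by rewrite /wt; case: ifP => _; rewrite ?rmorph0 // /inv rmorphN rmorph_nat. Qed.

Lemma cnt_mid f : f != ftrue -> f != ffalse -> (0 < cnt f < n.+1)%N.
Proof.
move=> nt nf.
have c0 : (0 < cnt f)%N by rewrite lt0n; apply/eqP => /cnt0; apply/eqP.
have c1 : (cnt f < n.+1)%N.
  rewrite ltn_neqAle -(cnt_compl f) leq_addr andbT; apply/eqP.
  move=> H; move/eqP: nt; apply; apply: cntT.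
  move/eqP: H; rewrite -{1}[cnt f]addn0 eqn_add2l => /eqP H0.
  by rewrite -(cnt_compl f) -H0 addn0.
by rewrite c0 c1.
Qed.

Lemma wtP f : ((f == ftrue) : nat)%:R + ((f == ffalse) : nat)%:R + wt (cnt f) * (cnt f)%:R = 1 :> A.
Proof.
have [->|nt] := eqVneq f ftrue.
  by rewrite (negbTE ftrue_neq) cnt_ftrue /wt ltnn andbF mul0r !addr0.
have [->|nf] := eqVneq f ffalse.
  by rewrite cnt_ffalse /wt /= mul0r add0r addr0.
rewrite /= !add0r /wt.
by case/andP: (cnt_mid nt nf) => c0 c1; rewrite c0 c1 mulrC invP ?c0.
Qed.

Lemma Nm_add a b : exists y, Nm' (a + b) = Nm' a + Nm' b + \sum_(j < n.+1) iter j s y.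
Proof.
pose G (x : bool) := if x then a else b.
exists (\sum_f wt (cnt f) * (f 0 : nat)%:R * V G f).
rewrite main_id; last exact: wt_s.
rewrite /Nm' (eq_bigr (fun i : 'I_n.+1 => iter i s a + iter i s b)); last by move=> i _; rewrite iterDr.
rewrite expand.
transitivity (\sum_f (((f == ftrue) : nat)%:R + ((f == ffalse) : nat)%:R + wt (cnt f) * (cnt f)%:R) * V G f).
  apply: eq_bigr => f _; rewrite wtP mul1r /V; apply: eq_bigr => i _.
  by case: (f i).
under eq_bigr => f _ do rewrite !mulrDl.
rewrite !big_split /=; congr (_ + _ + _).
  rewrite (bigD1 ftrue) //= eqxx mul1r big1 ?addr0; last by move=> f /negbTE ->; rewrite mul0r.
  by rewrite /V; apply: eq_bigr => i _; rewrite ffunE.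
rewrite (bigD1 ffalse) //= eqxx mul1r big1 ?addr0; last by move=> f /negbTE ->; rewrite mul0r.
by rewrite /V; apply: eq_bigr => i _; rewrite ffunE.
Qed.


Definition wtk k m : A := if (m == k) && (0 < k)%N then inv k else 0.
Lemma wtk_s k m : s (wtk k m) = wtk k m.
Proof. by rewrite /wtk; case: ifP => _; rewrite ?rmorph0 // /inv rmorphN rmorph_nat. Qed.

Lemma uniq_core (K : comNzRingType) (psi : {rmorphism A -> K}) a :
  exists ys : nat -> A, psi a ^+ n.+1 + psi (Nm' (-a)) +
    \sum_(k < n.+1) psi a ^+ (n.+1 - k) * psi (\sum_(j < n.+1) iter j s (ys k)) = 0.
Proof.
pose G (x : bool) := if x then -a else 1.
exists (fun k => \sum_f wtk k (cnt f) * (f 0 : nat)%:R * V G f).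
set z := psi a.
have E0 : \prod_(i < n.+1) (iter i s (-a) + a) = 0.
  by rewrite (bigD1 ord0) //= addNr mul0r.
have E1 : \prod_(i < n.+1) (iter i s (-a) + a) = \sum_f a ^+ (cnt' f) * V G f.
  rewrite expand; apply: eq_bigr => f _.
  rewrite /cnt' -prodrXr /V -big_split; apply: eq_bigr => i _.
  by case: (f i) => /=; rewrite ?mul1r ?iter1r ?mulr1 ?expr1.
have E2 : \sum_f z ^+ (cnt' f) * psi (V G f) = 0.
  rewrite -[RHS](rmorph0 psi) -E0 E1 rmorph_sum; apply: eq_bigr => f _.
  by rewrite rmorphM rmorphXn.
rewrite -[RHS]E2.
have P f : z ^+ (cnt' f) * psi (V G f) =
   (f == ffalse)%:R * z ^+ n.+1 + (f == ftrue)%:R * psi (Nm' (-a)) +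
   \sum_(k < n.+1) z ^+ (n.+1 - k) * psi (wtk k (cnt f) * (cnt f)%:R * V G f).
  have [->|nt] := eqVneq f ftrue.
    have c' : cnt' ftrue = 0%N.
      by apply/eqP; rewrite -(eqn_add2l (cnt ftrue)) cnt_compl cnt_ftrue addn0.
    rewrite (negbTE ftrue_neq) c' expr0 mul1r mul0r add0r mul1r big1 ?addr0.
      by congr (psi _); rewrite /V /Nm'; apply: eq_bigr => i _; rewrite ffunE.
    move=> k _; rewrite cnt_ftrue /wtk.
    by rewrite (_ : (n.+1 == k) = false) ?mul0r ?rmorph0 ?mulr0 // gtn_eqF.
  have [->|nf] := eqVneq f ffalse.
    have c' : cnt' ffalse = n.+1.
      by rewrite -(cnt_compl ffalse) cnt_ffalse.
    rewrite c' mul1r mul0r addr0 big1 ?addr0.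
      rewrite /V big1 ?rmorph1 ?mulr1 // => i _; by rewrite ffunE iter1r.
    by move=> k _; rewrite cnt_ffalse mulr0 mul0r rmorph0 mulr0.
  case/andP: (cnt_mid nt nf) => c0 c1.
  rewrite /= !mul0r !add0r (bigD1 (Ordinal c1)) //= big1 ?addr0.
    rewrite /wtk eqxx c0 /= [inv (cnt f) * _]mulrC invP ?c0 // mul1r.
    congr (_ ^+ _ * _).
    by rewrite -(cnt_compl f) addKn.
  move=> k nk; rewrite /wtk (_ : (cnt f == k) = false) ?mul0r ?rmorph0 ?mulr0 //.
  by apply/negbTE; apply: contra nk => /eqP e; apply/eqP/val_inj.
under [RHS]eq_bigr => f _ do rewrite P.
rewrite !big_split /=; congr (_ + _ + _).
- rewrite (bigD1 ffalse) //= eqxx mul1r big1 ?addr0 //.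
  by move=> f /negbTE ->; rewrite mul0r.
- rewrite (bigD1 ftrue) //= eqxx mul1r big1 ?addr0 //.
  by move=> f /negbTE ->; rewrite mul0r.
rewrite exchange_big /=; apply: eq_bigr => k _.
rewrite -mulr_sumr -rmorph_sum main_id //; exact: wtk_s.
Qed.

End Core.

Unset Implicit Arguments.
Set Strict Implicit.
Definition mk_rmorph (R S : comNzRingType) (f : R -> S) (fB : zmod_morphism f)
  (fM : monoid_morphism f) : {rmorphism R -> S} :=
  HB.pack f (GRing.isZmodMorphism.Build R S f fB) (GRing.isMonoidMorphism.Build R S f fM).

Lemma mk_rmorphE (R S : comNzRingType) f fB fM x : @mk_rmorph R S f fB fM x = f x.
Proof. by []. Qed.

Theorem lemma5p16
  (p : nat) (p_prime : prime p)
  (k : closedFieldType) (k_char : p \in [pchar k])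
  (k_alg : algebraic_over_prime_field k)
  (A : comNzRingType) (A_char : (p%:R : A) = 0)
  (sigma : {rmorphism A -> A}) (sigma_order : forall a : A, iter p sigma a = a)
  (S : {pred A})
  (S1 : 1 \in S)
  (SB : forall x y, x \in S -> y \in S -> x - y \in S)
  (SM : forall x y, x \in S -> y \in S -> x * y \in S)
  (S_inv : forall x, x \in S -> sigma x = x)
  (S_Nm : forall a, Nm sigma p a \in S)
  (S_N : forall a, normsum sigma p a \in S)
  (chi : A -> k)
  (chi1 : chi 1 = 1)
  (chiD : forall x y, x \in S -> y \in S -> chi (x + y) = chi x + chi y)
  (chiM : forall x y, x \in S -> y \in S -> chi (x * y) = chi x * chi y)
  (chi_N : forall a, chi (normsum sigma p a) = 0) :
  exists chit : {rmorphism A -> k},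
    [/\ (forall x, x \in S -> chit x = chi x),
        (forall psi : {rmorphism A -> k},
            (forall x, x \in S -> psi x = chi x) -> forall a, psi a = chit a)
      & (forall a, chit a ^+ p = chi (Nm sigma p a))].
Proof.
have p0 := prime_gt0 p_prime.
have frob_inj x y : x ^+ p = y ^+ p -> x = y :> k.
  move=> E; apply/eqP; rewrite -subr_eq0.
  have : (x - y) ^+ p == 0.
    by rewrite -pFrobenius_autE pFrobenius_autB_comm ?pFrobenius_autE ?E ?subrr //; exact: mulrC.
  by rewrite expf_eq0 p0.
have frobD x y : (x + y) ^+ p = x ^+ p + y ^+ p :> k.
  by rewrite -!(pFrobenius_autE k_char) pFrobenius_autD_comm //; exact: mulrC.
have root_ex c : exists x : k, x ^+ p == c.
  have : size ('X^p - c%:P) != 1%N by rewrite size_XnsubC // eqSS -lt0n.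
  by move/closed_rootP => [x]; rewrite rootE !hornerE subr_eq0; by exists x.
pose chit a := xchoose (root_ex (chi (Nm sigma p a))).
have chitP a : chit a ^+ p = chi (Nm sigma p a) by apply/eqP/(xchooseP (root_ex _)).
have S0 : 0 \in S by rewrite -(subrr 1) SB.
have SN x : x \in S -> - x \in S by move=> xS; rewrite -sub0r SB.
have SD x y : x \in S -> y \in S -> x + y \in S.
  by move=> xS yS; rewrite -(opprK y) SB ?SN.
have SX x m : x \in S -> x ^+ m \in S.
  by move=> xS; elim: m => [|m IH]; rewrite ?expr0 ?exprS ?SM.
have chiX x m : x \in S -> chi (x ^+ m) = chi x ^+ m.
  by move=> xS; elim: m => [|m IH]; rewrite ?expr0 ?exprS ?chiM ?SX ?IH.
have NmM x y : Nm sigma p (x * y) = Nm sigma p x * Nm sigma p y.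
  by rewrite /Nm -big_split; apply: eq_bigr => i _; rewrite iterMr.
have Nm1 : Nm sigma p 1 = 1.
  by rewrite /Nm big1 // => i _; rewrite iter1r.
have NmS x : x \in S -> Nm sigma p x = x ^+ p.
  move=> xS; rewrite /Nm (eq_bigr (fun _ => x)) ?prodr_const ?card_ord //.
  by move=> i _; elim: (nat_of_ord i) => //= m ->; rewrite S_inv.
have [n pn] : exists n, p = n.+1 by exists p.-1; rewrite prednK.
subst p.
have NmE a : Nm sigma n.+1 a = Nm' n sigma a by [].
have NsE y : normsum sigma n.+1 y = \sum_(j < n.+1) iter j sigma y by [].
have chit_add x y : chit (x + y) = chit x + chit y.
  apply: frob_inj; rewrite frobD !chitP.
  have [w Hw] := Nm_add sigma_order p_prime A_char x y.
  rewrite NmE Hw -!NmE -NsE chiD ?SD ?S_Nm ?S_N // chi_N addr0 chiD ?S_Nm //.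
have chit0 : chit 0 = 0.
  by have := chit_add 0 0; rewrite addr0 => /eqP; rewrite eq_sym -subr_eq0 addrK => /eqP.
have chitN x : chit (- x) = - chit x.
  by apply/eqP; rewrite -subr_eq0 opprK -chit_add addNr chit0.
have fB : zmod_morphism chit by move=> x y; rewrite chit_add chitN.
have fM : monoid_morphism chit.
  split.
    by apply: frob_inj; rewrite chitP expr1n Nm1 chi1.
  by move=> x y; apply: frob_inj; rewrite exprMn !chitP NmM chiM ?S_Nm.
exists (@mk_rmorph A k chit fB fM); split.
- move=> x xS; rewrite mk_rmorphE; apply: frob_inj.
  by rewrite chitP NmS // chiX.
- move=> psi Hpsi a; rewrite mk_rmorphE; apply: frob_inj; rewrite chitP.
  have [ys E] := uniq_core sigma_order p_prime A_char psi a.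
  rewrite big1 ?addr0 in E; last first.
    by move=> i _; rewrite -NsE (Hpsi _ (S_N _)) chi_N mulr0.
  have NmN : Nm' n sigma (- a) = (-1) ^+ n.+1 * Nm' n sigma a.
    rewrite /Nm' (eq_bigr (fun i : 'I_n.+1 => -1 * iter i sigma a)); last first.
      by move=> i _; rewrite iterNr mulN1r.
    by rewrite big_split /= prodr_const card_ord.
  have sgn : (-1) ^+ n.+1 = -1 :> k.
    case: (even_prime p_prime) => [e|o]; last by rewrite -signr_odd o expr1.
    have h2 := pcharf0 k_char; rewrite e in h2 *.
    rewrite expr2 mulN1r opprK; apply/eqP; rewrite -subr_eq0 opprK.
    by move: h2; rewrite -[2%N]/(1+1)%N natrD => ->.
  rewrite NmN rmorphM rmorphXn rmorphN1 sgn mulN1r -NmE (Hpsi _ (S_Nm a)) in E.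
  by apply/eqP; rewrite -subr_eq0 E.
- exact: chitP.
Qed.
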